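(* Let $R=k[x_1,\dots,x_n]$ be a standard graded polynomial ring over a field $k$, $I\subseteq R$ a homogeneous ideal, and $(F_\bullet,d_\bullet)$ a homogeneous free resolution of $R/I$ with $F_0=R$. Write $F_1=F_1'\oplus Re_0$ with $e_0$ generating a free direct summand, and $d_2=d_2'+d_0$ with $d_2':F_2\to F_1'$, $d_0:F_2\to Re_0$. Let $\mathfrak a$ be a homogeneous ideal with $d_0(F_2)\subseteq\mathfrak a e_0$, and let $(G_\bullet,m_\bullet)$ be a homogeneous free resolution of $R/\mathfrak a$ with $G_0=R$. Let $K'=d_1(F_1')$, $K_0=(d_1(e_0))$ and $J=K'+\mathfrak a K_0$. Let $d_0':F_2\to R$ be $d_0$ followed by $e_0\mapsto 1$, and let $q_1:F_2\to G_1$ and $q_k:F_{k+1}\to G_k$ ($k\ge2$) be homomorphisms with $m_1q_1=d_0'$ and $m_kq_k=q_{k-1}d_{k+1}$ for $k\ge 2$. Consider the complex $T_\bullet$: $\cdots\to F_3\xrightarrow{d_3}F_2\xrightarrow{d_2'}F_1'$ (with $F_1'$ in homological degree $0$ and $F_{i}$ in degree $i-1$), and the complex $B_\bullet$: $\cdots\to G_2\xrightarrow{m_2}G_1\xrightarrow{\beta}R$, where $\beta(g)=-m_1(g)\cdot d_1(e_0)$ (with $R$ in degree $0$). Then the maps $d_1|_{F_1'}:F_1'\to R$ and $q_{i-1}:F_i\to G_{i-1}$ ($i\ge2$) form a morphism of complexes $T_\bullet\to B_\bullet$, and the mapping cone of this morphism is a free resolution of $R/J$.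
   Context: The decomposition $d_2=d_2'+d_0$ is obtained by composing $d_2$ with the projections of $F_1=F_1'\oplus Re_0$ onto its summands. The mapping cone has $R$ in homological degree $0$, $F_1'\oplus G_1$ in degree $1$, and $F_i\oplus G_i$ in degree $i\ge 2$. This mapping cone is called the trimming complex. *)

(* Defs.v *)
(* polynomial ring = multinomials' {mpoly k[n]},
   finite free modules = row vectors 'rV_r, module maps = matrices acting
   on the right (v |-> v *m M). *)
From mathcomp Require Import all_boot all_order all_algebra.
From mathcomp Require Import mpoly.
Set Implicit Arguments. Unset Strict Implicit. Unset Printing Implicit Defensive.
Import GRing.Theory.
Local Open Scope ring_scope.

Section Defs.
Variables (k : fieldType) (n : nat).
Local Notation R := {mpoly k[n]}.

Definition is_ideal (I : R -> Prop) : Prop :=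
  [/\ I 0, (forall p q, I p -> I q -> I (p + q)) & (forall r p, I p -> I (r * p))].

Definition is_homog_ideal (I : R -> Prop) : Prop :=
  is_ideal I /\ forall p (e : nat), I p -> I (pihomog mdeg e p).

Definition ideal_add (I J : R -> Prop) : R -> Prop :=
  fun p => exists x y, [/\ I x, J y & p = x + y].
Definition ideal_mul (I J : R -> Prop) : R -> Prop :=
  fun p => exists (l : nat) (f g : 'I_l -> R),
    (forall i, I (f i) /\ J (g i)) /\ p = \sum_(i < l) f i * g i.
Definition principal_ideal (f : R) : R -> Prop := fun p => exists r, p = r * f.
Definition image_ideal (a : nat) (M : 'M[R]_(a, 1)) : R -> Prop :=
  fun p => exists u : 'rV[R]_a, (u *m M) 0 0 = p.

(* homogeneous (degree 0) map between graded free modules with generator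
   degrees src (source) and tgt (target): entry (i,j) is homogeneous of
   degree src i - tgt j *)
Definition homog_mx (r s : nat) (src : 'I_r -> int) (tgt : 'I_s -> int)
  (M : 'M[R]_(r, s)) : Prop :=
  forall i j, M i j != 0 ->
    exists e : nat, src i = (tgt j + e%:Z)%R /\ M i j \is ishomog1 e mdeg.

Definition exact_at (p q r : nat) (A : 'M[R]_(p, q)) (B : 'M[R]_(q, r)) : Prop :=
  A *m B = 0 /\ forall v : 'rV[R]_q, v *m B = 0 -> exists w : 'rV[R]_p, w *m A = v.

(* A free resolution  ... -> F_3 --d_3--> F_2 --d_2--> F_1 --d_1--> F_0 = R
   of R/I, with rank F_1 = r1, rank F_(i+2) = r i, and
   d1 = d_1, d2 = d_2, d i = d_(i+3). *)
Definition free_resolution (I : R -> Prop) (r1 : nat) (d1 : 'M[R]_(r1, 1))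
  (r : nat -> nat) (d2 : 'M[R]_(r 0%N, r1)) (d : forall i, 'M[R]_(r i.+1, r i)) : Prop :=
  [/\ (forall p, I p <-> image_ideal d1 p),
      exact_at d2 d1, exact_at (d 0%N) d2 & forall i, exact_at (d i.+1) (d i)].

Definition homog_free_resolution (I : R -> Prop) (r1 : nat) (d1 : 'M[R]_(r1, 1))
  (r : nat -> nat) (d2 : 'M[R]_(r 0%N, r1)) (d : forall i, 'M[R]_(r i.+1, r i)) : Prop :=
  free_resolution I d1 d2 d /\
  exists (s1 : 'I_r1 -> int) (s : forall i, 'I_(r i) -> int),
    [/\ homog_mx s1 (fun _ => 0%R) d1, homog_mx (s 0%N) s1 d2
      & forall i, homog_mx (s i.+1) (s i) (d i)].

End Defs.

(* Main.v *)
Require Import Defs.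
From mathcomp Require Import all_boot all_order all_algebra.
From mathcomp Require Import mpoly.
Import GRing.Theory.
Local Open Scope ring_scope.

Section Aux.
Variables (k : fieldType) (n : nat).
Local Notation R := {mpoly k[n]}.

Lemma cone_exact fa fb fc ga gb gc (Da : 'M[R]_(fa,fb)) (Db : 'M[R]_(fb,fc))
  (Qa : 'M[R]_(fa,gb)) (Qb : 'M[R]_(fb,gc)) (Ma : 'M[R]_(ga,gb)) (Mb : 'M[R]_(gb,gc)) :
  Da *m Db = 0 -> Qa *m Mb = Da *m Qb -> exact_at Ma Mb ->
  (forall (x : 'rV[R]_fb) (y : 'rV[R]_gb), x *m Db = 0 -> x *m Qb + y *m Mb = 0 -> exists w, w *m Da = x) ->
  exact_at (block_mx (- Da) Qa 0 Ma) (block_mx (- Db) Qb 0 Mb).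
Proof.
move=> HD HQ [HM HMe] Hker; split.
  rewrite mulmx_block !mulmxN !mulNmx HD HQ HM !mul0mx !mulmx0 opprK.
  by rewrite !addr0 addNr oppr0 block_mx0.
move=> v; rewrite -(hsubmxK v); set x := lsubmx v; set y := rsubmx v.
rewrite mul_row_block mulmx0 addr0 -row_mx0 => /eq_row_mx [H1 H2].
have H1' : x *m Db = 0 by rewrite -[x *m Db]opprK -mulmxN H1 oppr0.
have [w Hw] := Hker x y H1' H2.
have [z Hz] : exists z, z *m Ma = y + w *m Qa.
  apply: HMe; rewrite mulmxDl -mulmxA HQ mulmxA Hw addrC; exact: H2.
exists (row_mx (- w) z); rewrite mul_row_block mulmx0 addr0 mulNmx mulmxN opprK Hw.
by rewrite Hz addrCA mulNmx addNr addr0.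
Qed.

Lemma sum_principal (A : R -> Prop) (HA : is_ideal A) (f0 : R) l (f g : 'I_l -> R) :
  (forall i, A (f i) /\ principal_ideal f0 (g i)) ->
  exists al, A al /\ \sum_(i < l) f i * g i = al * f0.
Proof.
case: HA => H0 HD HM.
elim: l f g => [|l IH] f g H.
  by exists 0; rewrite big_ord0 mul0r.
have [al [Hal Hs]] := IH (fun i => f (widen_ord (leqnSn l) i)) (fun i => g (widen_ord (leqnSn l) i))
  (fun i => H _).
have [Hf [r Hr]] := H ord_max.
exists (al + r * f ord_max); split; first by apply: HD => //; exact: HM.
rewrite big_ord_recr /=.
by rewrite Hs Hr mulrDl mulrCA mulrA.
Qed.

End Aux.

Theorem theorem2p5 (k : fieldType) (n : nat)
  (I : {mpoly k[n]} -> Prop) (HI : is_homog_ideal I)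
  (* F_1 = F_1' (+) R e_0, rank F_1' = a; F_(i+2) of rank rF i *)
  (a : nat) (rF : nat -> nat)
  (d1' : 'M[{mpoly k[n]}]_(a, 1))          (* d_1 restricted to F_1' *)
  (f0 : {mpoly k[n]})                       (* d_1(e_0) *)
  (d2' : 'M[{mpoly k[n]}]_(rF 0%N, a))       (* d_2' : F_2 -> F_1' *)
  (d0 : 'M[{mpoly k[n]}]_(rF 0%N, 1))        (* d_0' : F_2 -> R *)
  (d : forall i, 'M[{mpoly k[n]}]_(rF i.+1, rF i))   (* d i = d_(i+3) *)
  (HF : homog_free_resolution I (col_mx d1' (f0%:M : 'M_1)) (row_mx d2' d0) d)
  (A : {mpoly k[n]} -> Prop) (HA : is_homog_ideal A)
  (Hd0 : forall v : 'rV[{mpoly k[n]}]_(rF 0%N), A ((v *m d0) 0 0))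
  (* resolution G of R/A: G_1 of rank b, G_(i+2) of rank rG i *)
  (b : nat) (rG : nat -> nat)
  (m1 : 'M[{mpoly k[n]}]_(b, 1)) (m2 : 'M[{mpoly k[n]}]_(rG 0%N, b))
  (m : forall i, 'M[{mpoly k[n]}]_(rG i.+1, rG i))   (* m i = m_(i+3) *)
  (HG : homog_free_resolution A m1 m2 m)
  (q1 : 'M[{mpoly k[n]}]_(rF 0%N, b))                   (* q_1 : F_2 -> G_1 *)
  (q : forall i, 'M[{mpoly k[n]}]_(rF i.+1, rG i))    (* q i = q_(i+2) : F_(i+3) -> G_(i+2) *)
  (Hq1 : q1 *m m1 = d0)
  (Hq2 : q 0%N *m m2 = d 0%N *m q1)
  (Hq : forall i, q i.+1 *m m i = d i.+1 *m q i) :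
  let beta := - (f0 *: m1) in
  (* the maps d_1|F_1', q_1, q_2, ... form a morphism of complexes T -> B *)
  [/\ d2' *m d1' = q1 *m beta, q 0%N *m m2 = d 0%N *m q1
    & forall i, q i.+1 *m m i = d i.+1 *m q i] /\
  (* its mapping cone is a free resolution of R/J, J = K' + A K_0 *)
  free_resolution
    (ideal_add (image_ideal d1') (ideal_mul A (principal_ideal f0)))
    (col_mx d1' beta)
    (block_mx (- d2') q1 0 m2)
    (fun i => block_mx (- d i) (q i) 0 (m i)).
Proof.
move=> beta.
case: HF => [[HI1 Hex1 Hex2 Hexi] _].
case: HG => [[HA1 Hm1 Hm2 Hmi] _].
case: HA => [HAi _].
have H21 : d2' *m d1' + d0 *m f0%:M = 0.
  by case: Hex1 => H _; rewrite mul_row_col in H.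
have E1 : d2' *m d1' = q1 *m beta.
  rewrite /beta mulmxN -scalemxAr Hq1 -mul_mx_scalar.
  by apply/eqP; rewrite -addr_eq0 H21.
split; first by split.
split.
- move=> p; split.
  + case=> x [yy [[u Hu] Hmul ->]].
    case: Hmul => l [f [g [Hfg ->]]].
    have [al [Hal ->]] := @sum_principal _ _ _ HAi _ _ _ _ Hfg.
    have [v Hv] := (HA1 al).1 Hal.
    exists (row_mx u (-v)).
    rewrite mul_row_col mxE Hu /beta mulNmx mulmxN opprK -scalemxAr mxE Hv.
    by rewrite mulrC.
  + case=> v <-.
    rewrite -(hsubmxK v) mul_row_col.
    set u := lsubmx v; set g := rsubmx v.
    exists ((u *m d1') 0 0), ((g *m beta) 0 0); split; last by rewrite mxE.
      by exists u.
    exists 1%N, (fun _ => - (g *m m1) 0 0), (fun _ => f0); split.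
      move=> i; split; last by exists 1; rewrite mul1r.
      have HA' : A ((g *m m1) 0 0) by apply/(HA1 _).2; exists g.
      case: HAi => _ _ HM; rewrite -mulN1r; exact: HM.
    by rewrite big_ord1 /beta mulmxN -scalemxAr !mxE mulNr mulrC.
- split.
    rewrite mul_block_col -E1 mulNmx addNr mul0mx add0r /beta mulmxN.
    by rewrite -scalemxAr (proj1 Hm1) scaler0 oppr0 col_mx0.
  move=> v; rewrite -(hsubmxK v) mul_row_col.
  set u := lsubmx v; set g := rsubmx v => H.
  have Hu : u *m d1' = f0 *: (g *m m1).
    apply: subr0_eq; move: H; by rewrite /beta mulmxN -scalemxAr.
  have [x Hx] : exists x, x *m row_mx d2' d0 = row_mx u (-(g *m m1)).
    apply: (proj2 Hex1); rewrite mul_row_col mulNmx mul_mx_scalar Hu.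
    by rewrite subrr.
  move: Hx; rewrite mul_mx_row => /eq_row_mx [Hx1 Hx2].
  have [y Hy] : exists y, y *m m2 = g + x *m q1.
    by apply: (proj2 Hm1); rewrite mulmxDl -mulmxA Hq1 Hx2 addrN.
  exists (row_mx (-x) y).
  rewrite mul_row_block mulmx0 addr0 mulNmx mulmxN opprK Hx1 Hy mulNmx.
  by rewrite addrCA addNr addr0.
- apply: cone_exact => //.
  + case: Hex2 => H _; move: H; rewrite mul_mx_row -row_mx0.
    by case/eq_row_mx.
  + move=> x y Hx Hxy.
    have Hx0 : x *m d0 = 0.
      have := congr1 (mulmx^~ m1) Hxy.
      by rewrite mulmxDl -!mulmxA Hq1 (proj1 Hm1) mulmx0 addr0 mul0mx.
    apply: (proj2 Hex2); by rewrite mul_mx_row Hx Hx0 row_mx0.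
- move=> i; apply: cone_exact => //.
  + exact: (proj1 (Hexi i)).
  + by move=> x y Hx _; apply: (proj2 (Hexi i)).
Qed.
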